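(* Let $\vec B$ be a binary digit vector with scale factor $N$ and cumulative digit function $g$. Then $F_{\vec B}(k/N)=g(k)/\|\vec B\|$ for all $k\in\{0,\dots,N\}$.
   Context: A binary digit vector of length (scale factor) $N\ge3$ is $\vec B=(b_0,\dots,b_{N-1})\in\{0,1\}^N$ with $2\le\|\vec B\|:=\sum_i b_i\le N-1$; its digit set is $D=\{i:b_i=1\}$. With $\phi_d(x)=(x+d)/N$ for $d\in D$, let $\mu_{\vec B}$ be the unique Borel probability measure with $\mu_{\vec B}=\frac{1}{\|\vec B\|}\sum_{d\in D}\mu_{\vec B}\circ\phi_d^{-1}$, supported on the attractor $C_{\vec B}\subset[0,1]$. The CDF is $F_{\vec B}(x)=\mu_{\vec B}([0,x])$. The cumulative digit function is $g(0)=0$, $g(i)=\sum_{j=0}^{i-1}b_j$ for $1\le i\le N$. *)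

(* Defs.v *)
From HB Require Import structures.
From mathcomp Require Import all_boot all_order all_algebra.
From mathcomp Require Import all_classical all_reals all_analysis.
Set Implicit Arguments. Unset Strict Implicit. Unset Printing Implicit Defensive.
Import Order.TTheory GRing.Theory Num.Theory.
Local Open Scope classical_set_scope.
Local Open Scope ring_scope.

(* A binary digit vector of length N is b : 'I_N -> bool; digit set D = {i | b i}. *)
Definition digit_norm (N : nat) (b : 'I_N -> bool) : nat := (\sum_(i < N) (b i : nat))%N.

Definition is_binary_digit_vector (N : nat) (b : 'I_N -> bool) : Prop :=
  (3 <= N)%N /\ (2 <= digit_norm b)%N /\ (digit_norm b <= N - 1)%N.

Definition cum_digit (N : nat) (b : 'I_N -> bool) (k : nat) : nat :=
  (\sum_(j < N | (j < k)%N) (b j : nat))%N.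

Definition phi_map {R : realType} (N : nat) (d : nat) (x : R) : R :=
  (x + d%:R) / N%:R.

Definition is_self_similar {R : realType} (N : nat) (b : 'I_N -> bool)
  (mu : set R -> \bar R) : Prop :=
  forall A : set R, measurable A ->
    (mu A = ((digit_norm b)%:R^-1)%:E *
           \sum_(d < N | b d) mu (phi_map N d @^-1` A))%E.

Definition digit_cdf {R : realType} (mu : set R -> \bar R) (x : R) : R :=
  fine (mu `[0, x]%classic).

(* Main.v *)
Require Import Defs.
From HB Require Import structures.
From mathcomp Require Import all_boot all_order all_algebra.
From mathcomp Require Import all_classical all_reals all_analysis.
From mathcomp Require Import zify ring lra.
Import Order.TTheory GRing.Theory Num.Theory.
Local Open Scope classical_set_scope.
Local Open Scope ring_scope.

Theorem lemma2p2 (R : realType) (N : nat) (b : 'I_N -> bool)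
  (mu : probability R R) :
  is_binary_digit_vector b ->
  is_self_similar b mu ->
  forall k : nat, (k <= N)%N ->
    digit_cdf mu (k%:R / N%:R) = (cum_digit b k)%:R / (digit_norm b)%:R.
Proof.
move=> [N3 [n2 nN]] SS.
have N0 : (0 < N)%N by lia.
have NR0 : (0:R) < N%:R by rewrite ltr0n.
have NR3 : (3:R) <= N%:R by rewrite (ler_nat R 3).
have nR2 : (2:R) <= (digit_norm b)%:R by rewrite (ler_nat R 2).
have nR0 : (0:R) < (digit_norm b)%:R by lra.
pose m (A : set R) := fine (mu A).
have muE A : measurable A -> mu A = (m A)%:E.
  by move=> mA; rewrite fineK // fin_num_measure.
have m0 A : 0 <= m A by rewrite /m fine_ge0.
have mle A B : measurable A -> measurable B -> A `<=` B -> m A <= m B.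
  move=> mA mB AB; rewrite -lee_fin -(muE A mA) -(muE B mB).
  by apply: le_measure => //; rewrite inE.
have mphif (d : nat) : measurable_fun setT (phi_map N d : R -> R).
  have h1 : measurable_fun setT ((fun x : R => x) \+ (fun _ => d%:R)).
    have h0 : measurable_fun setT (fun x : R => x) by exact: measurable_id.
    have h0' : measurable_fun setT (fun _ : R => (d%:R : R)) by exact: measurable_cst.
    exact: measurable_realfun.measurable_funD h0 h0'.
  have h3 : measurable_fun setT (fun _ : R => (N%:R^-1 : R)) by exact: measurable_cst.
  have h2 := measurable_realfun.measurable_funM h1 h3.
  exact: h2.
have mphi (d : nat) (A : set R) : measurable A -> measurable (phi_map N d @^-1` A).
  by move=> mA; rewrite -[_ @^-1` _]setTI; exact: (mphif d measurableT A mA).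
have SSm (A : set R) : measurable A ->
    m A = (digit_norm b)%:R^-1 * \sum_(d < N | b d) m (phi_map N d @^-1` A).
  move=> mA; apply: EFin_inj; rewrite -muE // SS // EFinM -sumEFin.
  congr (_ * _)%E; apply: eq_bigr => d _; rewrite muE //; exact: mphi.
have sumc (c : R) : \sum_(d < N | b d) c = (digit_norm b)%:R * c.
  rewrite big_mkcond /digit_norm natr_sum mulr_suml; apply: eq_bigr => i _.
  by case: (b i); rewrite /= ?mul1r ?mul0r.
have step (A B : set R) : measurable A -> measurable B ->
    (forall d : 'I_N, phi_map N d @^-1` A `<=` B) -> m A <= m B.
  move=> mA mB H; rewrite SSm //.
  apply: (@le_trans _ _ ((digit_norm b)%:R^-1 * \sum_(d < N | b d) m B)).
    rewrite ler_wpM2l ?invr_ge0 ?ler0n //; apply: ler_sum => d _.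
    apply: mle; [exact: mphi | by [] | exact: H].

  by rewrite sumc mulrA mulVf ?mul1r // gt_eqF.
have lim0 (c : R) (E : nat -> set R) : (forall k, measurable (E k)) ->
    (forall i j, (i <= j)%N -> E j `<=` E i) -> \bigcap_k E k = set0 ->
    (forall k, c <= m (E k)) -> c <= 0.
  move=> mE decE capE cle.
  have cv : mu \o E @ \oo --> mu (\bigcap_k E k).
    apply: nonincreasing_cvg_mu => //.
    - by rewrite (le_lt_trans (probability_le1 _ (mE 0%N))) ?ltry.
    - exact: bigcap_measurable.
    - by move=> i j ij; apply/subsetPset; exact: decE.
  move: cv; rewrite capE measure0 => cv.
  suff : (c%:E <= 0)%E by rewrite lee_fin.
  rewrite -(cvg_lim _ cv) //; apply: lime_ge; first exact: (cvgP _ cv).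
  by near=> k; rewrite /= muE //; exact: cle.
have R2 : m `]2, +oo[%classic = 0.
  apply/le_anti; rewrite m0 andbT.
  apply: (lim0 _ (fun k => `]k%:R + 2, +oo[%classic)).
  - by [].
  - move=> i j ij x /=; rewrite !in_itv /= !andbT; apply: le_lt_trans.
    by rewrite lerD2r ler_nat.
  - rewrite -subset0 => x /= H; have := H (Num.truncn x) I.
    rewrite /= in_itv /= andbT; have := truncnS_gt x.
    rewrite -addn1 natrD; lra.
  - elim => [|k IH]; first by rewrite add0r.
    apply: (le_trans IH); apply: step => // d x /=; rewrite !in_itv /= !andbT.
    have dN : (d%:R : R) + 1 <= N%:R by rewrite natr1 ler_nat.
    have k0 : (0:R) <= k%:R by rewrite ler0n.
    have kN : 0 <= (k%:R : R) * (N%:R - 3) by apply: mulr_ge0; lra.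
    rewrite -addn1 natrD ltr_pdivlMr // => H; nra.
have L1 : m `]-oo, -1]%classic = 0.
  apply/le_anti; rewrite m0 andbT.
  apply: (lim0 _ (fun k => `]-oo, - (k%:R + 1)]%classic)).
  - by [].
  - move=> i j ij x /=; rewrite !in_itv /= => /le_trans; apply.
    by rewrite lerN2 lerD2r ler_nat.
  - rewrite -subset0 => x /= H; have := H (Num.truncn (- x)) I.
    rewrite /= in_itv /=; have := truncnS_gt (- x).
    rewrite -addn1 natrD; lra.
  - elim => [|k IH]; first by rewrite add0r.
    apply: (le_trans IH); apply: step => // d x /=; rewrite !in_itv /=.
    have d0 : (0 : R) <= d%:R by rewrite ler0n.
    have k0 : (0:R) <= k%:R by rewrite ler0n.
    have kN : 0 <= (k%:R : R) * (N%:R - 3) by apply: mulr_ge0; lra.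
    rewrite -addn1 natrD ler_pdivrMr // => H; nra.
have atom (A : set R) (j : 'I_N) : measurable A ->
    (forall d : 'I_N, d != j -> m (phi_map N d @^-1` A) = 0) ->
    phi_map N j @^-1` A `<=` A -> m A = 0.
  move=> mA Hd Hj; apply/le_anti; rewrite m0 andbT.
  have H1 : m A <= (digit_norm b)%:R^-1 * m A.
    rewrite {1}SSm //; rewrite ler_wpM2l ?invr_ge0 ?ler0n //.
    rewrite big_mkcond /=.
    apply: (@le_trans _ _ (\sum_(d < N) m (phi_map N d @^-1` A))).
      by apply: ler_sum => d _; case: (b d).
    rewrite (bigD1 j) //= big1 ?addr0; last by move=> d /Hd.
    by apply: mle => //; exact: mphi.
  have hy : (digit_norm b)%:R^-1 <= 2^-1 :> R.
    by rewrite lef_pV2 ?posrE //; lra.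
  have hy0 : 0 <= (digit_norm b)%:R^-1 :> R by rewrite invr_ge0; lra.
  have := m0 A; nra.
have Nm1 : (N.-1 < N)%N by rewrite ltn_predL.
have NR1 : (N.-1)%:R + 1 = N%:R :> R by rewrite natr1 prednK.
have R1 : m `]1, +oo[%classic = 0.
  apply: (atom _ (Ordinal Nm1)) => //.
  - move=> d dj; apply/le_anti; rewrite m0 andbT.
    apply: (@le_trans _ _ (m `]2, +oo[%classic)); last by rewrite R2.
    have dN : (d.+2 <= N)%N.
      move: dj (ltn_ord d); rewrite -(inj_eq val_inj) /=; lia.
    apply: mle; [exact: mphi | by [] | ] => x /=; rewrite !in_itv /= !andbT.
    have : (d%:R : R) + 2 <= N%:R by rewrite -[2]/(2%:R) -natrD ler_nat addn2.
    rewrite ltr_pdivlMr // mul1r; lra.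
  - move=> x /=; rewrite !in_itv /= !andbT ltr_pdivlMr // mul1r; lra.
have L0 : m `]-oo, 0[%classic = 0.
  apply: (atom _ (Ordinal N0)) => //.
  - move=> d dj; apply/le_anti; rewrite m0 andbT.
    apply: (@le_trans _ _ (m `]-oo, -1]%classic)); last by rewrite L1.
    have d1 : (1 <= d)%N.
      move: dj; rewrite -(inj_eq val_inj) /=; lia.
    apply: mle; [exact: mphi | by [] | ] => x /=; rewrite !in_itv /=.
    have : (1 : R) <= d%:R by rewrite (ler_nat R 1).
    rewrite /phi_map pmulr_llt0 ?invr_gt0 //; lra.
  - move=> x /=; rewrite !in_itv /= /phi_map pmulr_llt0 ?invr_gt0 // addr0 //.
have Z0 : m [set 0] = 0.
  apply: (atom _ (Ordinal N0)) => //.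
  - move=> d dj; apply/le_anti; rewrite m0 andbT.
    apply: (@le_trans _ _ (m `]-oo, -1]%classic)); last by rewrite L1.
    have d1 : (1 <= d)%N.
      move: dj; rewrite -(inj_eq val_inj) /=; lia.
    apply: mle; [exact: mphi | by [] | ] => x /=; rewrite in_itv /= /phi_map.
    have : (1 : R) <= d%:R by rewrite (ler_nat R 1).
    move=> h /eqP; rewrite mulf_eq0 invr_eq0 (gt_eqF NR0) orbF => /eqP; lra.
  - move=> x /=; rewrite /phi_map addr0 => /eqP; rewrite mulf_eq0 invr_eq0 (gt_eqF NR0) orbF => /eqP //.
pose Nul : set R := (`]-oo, 0[ `|` [set 0]) `|` `]1, +oo[.
have mNul : measurable Nul.
  by apply: measurableU; [apply: measurableU => // |] .
have mU (A B : set R) : measurable A -> measurable B -> m (A `|` B) <= m A + m B.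
  move=> mA mB; rewrite -lee_fin EFinD -(muE A mA) -(muE B mB) -muE; last exact: measurableU.
  exact: measureU2.
have mNul0 : m Nul = 0.
  apply/le_anti; rewrite m0 andbT.
  apply: (le_trans (mU _ _ _ _)) => //; first by apply: measurableU.
  rewrite R1 addr0; apply: (le_trans (mU _ _ _ _)) => //.
  by rewrite L0 Z0 addr0.
have null (A : set R) : measurable A -> A `<=` Nul -> m A = 0.
  move=> mA AN; apply/le_anti; rewrite m0 andbT.
  by apply: (@le_trans _ _ (m Nul)); [exact: mle | rewrite mNul0].
have full (A : set R) : measurable A -> ~` A `<=` Nul -> m A = 1.
  move=> mA AN; apply/le_anti.
  have := probability_le1 mu mA; rewrite (muE A mA) lee_fin => -> /=.
  have h1 : m setT = 1 by rewrite /m probability_setT.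
  have h2 : m (~` A) = 0 by apply: null => //; exact: measurableC.
  rewrite -{1}h1 -(setUv A).
  apply: (le_trans (mU _ _ _ _)) => //; first exact: measurableC.
  by rewrite h2 addr0.
move=> k kN.
have mI : measurable (`[0, k%:R / N%:R]%classic : set R) by [].
change (m `[0, k%:R / N%:R]%classic = (cum_digit b k)%:R / (digit_norm b)%:R).
rewrite SSm // mulrC; congr (_ * _).
transitivity (\sum_(d < N | b d) (((d : nat) < k)%N)%:R : R).
  apply: eq_bigr => d _; have dR : (0:R) <= d%:R by rewrite ler0n.
  case: (ltngtP d k) => dk /=.
  - apply: full; first exact: mphi.
    have dk' : (d%:R : R) + 1 <= k%:R by rewrite natr1 ler_nat.
    move=> x /= hx.
    case: (ltrP x 0) => x0; first by rewrite /Nul; left; left; rewrite /= in_itv /= x0.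
    case: (ltrP 1 x) => x1; first by rewrite /Nul; right; rewrite /= in_itv /= x1.
    exfalso; apply: hx; rewrite in_itv /= /phi_map; apply/andP; split.
      by rewrite pmulr_lge0 ?invr_gt0 //; lra.
    by rewrite ler_pM2r ?invr_gt0 //; lra.
  - apply: null; first exact: mphi.
    have dk' : (k%:R : R) + 1 <= d%:R by rewrite natr1 ler_nat.
    move=> x /=; rewrite in_itv /= /phi_map => /andP [h1 h2].
    move: h2; rewrite ler_pM2r ?invr_gt0 // => h2.
    by rewrite /Nul; left; left; rewrite /= in_itv /=; lra.
  - apply: null; first exact: mphi.
    move=> x /=; rewrite in_itv /= /phi_map => /andP [h1 h2].
    move: h2; rewrite ler_pM2r ?invr_gt0 // => h2.
    move: h1; rewrite pmulr_lge0 ?invr_gt0 // => h1.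
    rewrite dk in h2.
    case: (ltrP x 0) => x0; first by rewrite /Nul; left; left; rewrite /= in_itv /= x0.
    by rewrite /Nul; left; right; apply/eqP; rewrite eq_le x0 andbT; lra.
rewrite /cum_digit natr_sum big_mkcond [RHS]big_mkcond; apply: eq_bigr => d _.
by case: (b d); case: ((d : nat) < k)%N.
Unshelve. all: by end_near.
Qed.
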